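(* Let $w\in\mathbb{D}\setminus\{0\}$ and $B(z)=z^2\frac{w-z}{1-\bar wz}$. Let $k_w(z)=(1-\bar wz)^{-1}$, so that $\{e_1,e_2,e_3\}=\{1,z,\frac{z^2}{\|k_w\|}k_w\}$ is an orthonormal basis of the three-dimensional space $K^2_B$. For a linear operator $A$ on $K^2_B$ let $b_{i,j}=\langle Ae_j,e_i\rangle$. Then $A\in\mathcal{T}(B)$ if and only if $b_{2,2}=b_{1,1}$, $b_{2,3}=\bar wb_{1,3}+\|k_w\|^{-1}b_{1,2}$, $b_{3,2}=\|k_w\|^{-1}b_{2,1}+wb_{3,1}$, and $b_{3,3}=b_{1,1}+\bar w^2\|k_w\|b_{1,3}+\bar wb_{1,2}+wb_{2,1}+w^2\|k_w\|b_{3,1}$.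
   Context: $K^2_\theta=H^2\ominus\theta H^2$ for inner $\theta$, $P_\theta$ the orthogonal projection of $L^2(\mathbb{T})$ onto $K^2_\theta$. For $\varphi\in L^2$, $A^\theta_\varphi f=P_\theta(\varphi f)$ for $f\in K^2_\theta$ with $\varphi f\in L^2$; $\mathcal{T}(\theta)$ is the set of bounded such operators. $\|k_w\|=(1-|w|^2)^{-1/2}$ is the $H^2$-norm of $k_w$. *)

(* Defs.v *)
(* Complex numbers are modelled as pairs of reals;
   L^2(T) is modelled by Fourier coefficient sequences Z -> Cx (Plancherel),
   H^2 functions by Taylor = nonnegative Fourier coefficient sequences nat -> Cx. *)
From Stdlib Require Import Reals ZArith Arith.
Open Scope R_scope.

Record Cx := mkC { re : R ; im : R }.

Definition RtoC (r : R) : Cx := mkC r 0.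
Definition C0 : Cx := RtoC 0.
Definition C1 : Cx := RtoC 1.
Definition Cadd (x y : Cx) : Cx := mkC (re x + re y) (im x + im y).
Definition Cmul (x y : Cx) : Cx :=
  mkC (re x * re y - im x * im y) (re x * im y + im x * re y).
Definition Cconj (x : Cx) : Cx := mkC (re x) (- im x).
Definition Cnorm2 (x : Cx) : R := re x * re x + im x * im x.
Fixpoint Cpow (x : Cx) (n : nat) : Cx :=
  match n with O => C1 | S k => Cmul x (Cpow x k) end.

Definition Cser_cv (a : nat -> Cx) (l : Cx) : Prop :=
  Un_cv (fun N => sum_f_R0 (fun k => re (a k)) N) (re l) /\
  Un_cv (fun N => sum_f_R0 (fun k => im (a k)) N) (im l).

Definition L2 (phi : Z -> Cx) : Prop :=
  exists M : R, forall N : nat,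
    sum_f_R0 (fun n => Cnorm2 (phi (Z.of_nat n)) + Cnorm2 (phi (- Z.of_nat n - 1)%Z)) N <= M.

Definition knorm (w : Cx) : R := / sqrt (1 - Cnorm2 w).

(* Taylor coefficients of the orthonormal basis e_1 = 1, e_2 = z,
   e_3 = z^2 k_w / ||k_w||, where k_w(z) = sum_n conj(w)^n z^n. *)
Definition ebasis (w : Cx) (j : nat) (n : nat) : Cx :=
  match j with
  | 1%nat => if Nat.eqb n 0 then C1 else C0
  | 2%nat => if Nat.eqb n 1 then C1 else C0
  | 3%nat => if Nat.ltb n 2 then C0
             else Cmul (RtoC (/ knorm w)) (Cpow (Cconj w) (n - 2))
  | _ => C0
  end.

Definition prod_coef (phi : Z -> Cx) (f : nat -> Cx) (n : nat) (c : Cx) : Prop :=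
  Cser_cv (fun m => Cmul (phi (Z.of_nat n - Z.of_nat m)%Z) (f m)) c.

(* v = < A^B_phi e_j , e_i > = < P_B (phi e_j), e_i > = < phi e_j, e_i >_{L^2}
   (e_i lies in K^2_B, P_B self-adjoint; e_i has no negative coefficients). *)
Definition tto_entry (w : Cx) (phi : Z -> Cx) (i j : nat) (v : Cx) : Prop :=
  exists g : nat -> Cx,
    (forall n, prod_coef phi (ebasis w j) n (g n)) /\
    Cser_cv (fun n => Cmul (g n) (Cconj (ebasis w i n))) v.

Definition in_TTO (w : Cx) (b : nat -> nat -> Cx) : Prop :=
  exists phi : Z -> Cx, L2 phi /\
    forall i j : nat, (1 <= i <= 3)%nat -> (1 <= j <= 3)%nat ->
      tto_entry w phi i j (b i j).

(* Main.v *)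
Require Import Defs.
From Stdlib Require Import Reals ZArith Arith Lra Lia Psatz.
Open Scope R_scope.

Lemma Cx_ext x y : re x = re y -> im x = im y -> x = y.
Proof. destruct x, y; simpl; intros; subst; reflexivity. Qed.

Ltac cx := apply Cx_ext; simpl; ring.

Definition Cpsum (a : nat -> Cx) (N : nat) : Cx :=
  mkC (sum_f_R0 (fun k => re (a k)) N) (sum_f_R0 (fun k => im (a k)) N).

Lemma Un_cv_ext u v l : (forall n, u n = v n) -> Un_cv u l -> Un_cv v l.
Proof.
  intros E H eps Heps. destruct (H eps Heps) as [N HN]. exists N.
  intros n Hn. rewrite <- E. auto.
Qed.

Lemma Cser_unique a l1 l2 : Cser_cv a l1 -> Cser_cv a l2 -> l1 = l2.
Proof. intros [H1 H2] [H3 H4]. apply Cx_ext; eapply UL_sequence; eauto. Qed.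

Lemma Cser_ext a b l : (forall n, a n = b n) -> Cser_cv a l -> Cser_cv b l.
Proof.
  intros E [H1 H2]; split; eapply Un_cv_ext; try eassumption;
  intro N; apply sum_eq; intros; rewrite E; reflexivity.
Qed.

Lemma Un_cv_const c : Un_cv (fun _ => c) c.
Proof. intros eps He. exists 0%nat. intros. unfold R_dist. rewrite Rminus_diag, Rabs_R0. lra. Qed.

Lemma sum_lin f g x y N :
  sum_f_R0 (fun k => x * f k + y * g k) N = x * sum_f_R0 f N + y * sum_f_R0 g N.
Proof. induction N; simpl; [ring | rewrite IHN; ring]. Qed.

Lemma Rser_lin f g x y lf lg :
  Un_cv (fun N => sum_f_R0 f N) lf -> Un_cv (fun N => sum_f_R0 g N) lg ->
  Un_cv (fun N => sum_f_R0 (fun k => x * f k + y * g k) N) (x * lf + y * lg).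
Proof.
  intros Hf Hg. eapply Un_cv_ext. { intro N. symmetry. apply sum_lin. }
  apply CV_plus; apply CV_mult; auto; apply Un_cv_const.
Qed.

Lemma Cser_add a b la lb : Cser_cv a la -> Cser_cv b lb ->
  Cser_cv (fun n => Cadd (a n) (b n)) (Cadd la lb).
Proof.
  intros [H1 H2] [H3 H4]; split; simpl.
  - replace (re la + re lb) with (1 * re la + 1 * re lb) by ring.
    eapply Un_cv_ext; [|apply (Rser_lin _ _ 1 1 _ _ H1 H3)].
    intro N; apply sum_eq; intros; simpl; ring.
  - replace (im la + im lb) with (1 * im la + 1 * im lb) by ring.
    eapply Un_cv_ext; [|apply (Rser_lin _ _ 1 1 _ _ H2 H4)].
    intro N; apply sum_eq; intros; simpl; ring.
Qed.

Lemma Cser_scal k a la : Cser_cv a la ->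
  Cser_cv (fun n => Cmul k (a n)) (Cmul k la).
Proof.
  intros [H1 H2]; split; simpl.
  - replace (re k * re la - im k * im la) with (re k * re la + (- im k) * im la) by ring.
    eapply Un_cv_ext; [|apply (Rser_lin _ _ _ _ _ _ H1 H2)].
    intro N; apply sum_eq; intros; simpl; ring.
  - replace (re k * im la + im k * re la) with (re k * im la + im k * re la) by ring.
    eapply Un_cv_ext; [|apply (Rser_lin _ _ _ _ _ _ H2 H1)].
    intro N; apply sum_eq; intros; simpl; ring.
Qed.

Lemma sum_shift f N : sum_f_R0 f (S N) = f 0%nat + sum_f_R0 (fun k => f (S k)) N.
Proof. induction N; simpl in *; [ring | rewrite IHN; ring]. Qed.

Lemma Rser_shift f l : Un_cv (fun N => sum_f_R0 (fun k => f (S k)) N) l ->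
  Un_cv (fun N => sum_f_R0 f N) (f 0%nat + l).
Proof.
  intros H eps He. destruct (H eps He) as [N HN]. exists (S N).
  intros n Hn. destruct n as [|n]; [lia|]. rewrite sum_shift.
  unfold R_dist. replace (f 0%nat + sum_f_R0 (fun k => f (S k)) n - (f 0%nat + l))
    with (sum_f_R0 (fun k => f (S k)) n - l) by ring. apply HN. lia.
Qed.

Lemma Cser_shift a l : Cser_cv (fun n => a (S n)) l -> Cser_cv a (Cadd (a 0%nat) l).
Proof. intros [H1 H2]; split; simpl; apply Rser_shift; auto. Qed.

Lemma Rser_evzero f N : (forall n, (N < n)%nat -> f n = 0) ->
  Un_cv (fun M => sum_f_R0 f M) (sum_f_R0 f N).
Proof.
  intros Hz.
  assert (K : forall k, sum_f_R0 f (N + k) = sum_f_R0 f N).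
  { induction k. rewrite Nat.add_0_r; reflexivity.
    replace (N + S k)%nat with (S (N + k)) by lia. simpl. rewrite IHk, Hz by lia. ring. }
  intros eps He. exists N. intros n Hn. replace n with (N + (n - N))%nat by lia.
  rewrite K. unfold R_dist. rewrite Rminus_diag, Rabs_R0. lra.
Qed.

Lemma Cser_evzero a N : (forall n, (N < n)%nat -> a n = C0) -> Cser_cv a (Cpsum a N).
Proof.
  intros Hz; split; simpl; apply Rser_evzero; intros n Hn; rewrite Hz by auto; reflexivity.
Qed.

Lemma Cser_geom K r : 0 <= r < 1 ->
  Cser_cv (fun n => Cmul K (RtoC (r ^ n))) (Cmul K (RtoC (/ (1 - r)))).
Proof.
  intros Hr.
  assert (G : Un_cv (fun N => sum_f_R0 (fun k => r ^ k) N) (/ (1 - r))).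
  { pose proof (GP_infinite r) as P. unfold Pser, infinite_sum in P.
    intros eps He. assert (Rabs r < 1) by (rewrite Rabs_right; lra).
    destruct (P H eps He) as [N HN]. exists N. intros n Hn.
    specialize (HN n Hn). erewrite sum_eq; [exact HN|]. intros; simpl; ring. }
  assert (Z : Un_cv (fun N => sum_f_R0 (fun k => 0) N) 0).
  { eapply Un_cv_ext; [|apply Un_cv_const]. intro N; induction N; simpl; [|rewrite <- IHN]; ring. }
  split; simpl.
  - replace (re K * / (1 - r) - im K * 0) with (re K * / (1 - r) + 0 * 0) by ring.
    eapply Un_cv_ext; [|apply (Rser_lin _ _ (re K) 0 _ _ G Z)].
    intro N; apply sum_eq; intros; simpl; ring.
  - replace (re K * 0 + im K * / (1 - r)) with (im K * / (1 - r) + 0 * 0) by ring.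
    eapply Un_cv_ext; [|apply (Rser_lin _ _ (im K) 0 _ _ G Z)].
    intro N; apply sum_eq; intros; simpl; ring.
Qed.

Lemma shift_rec (u e : nat -> Cx) q c L L' :
  e 0%nat = C0 ->
  (forall m, e (S m) = Cadd (Cmul q (e m)) (if Nat.eqb m 1 then RtoC c else C0)) ->
  Cser_cv (fun m => Cmul (u (S m)) (e m)) L ->
  Cser_cv (fun m => Cmul (u m) (e m)) L' ->
  L' = Cadd (Cmul q L) (Cmul (RtoC c) (u 2%nat)).
Proof.
  intros E0 ES H1 H2.
  set (d := fun m : nat => if Nat.eqb m 1 then Cmul (RtoC c) (u 2%nat) else C0).
  assert (Hd : Cser_cv d (Cmul (RtoC c) (u 2%nat))).
  { replace (Cmul (RtoC c) (u 2%nat)) with (Cpsum d 1).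
    - apply Cser_evzero. intros n Hn. unfold d. destruct (Nat.eqb_spec n 1); [lia|auto].
    - unfold d; cx. }
  pose proof (Cser_add _ _ _ _ (Cser_scal q _ _ H1) Hd) as H3.
  assert (H4 : Cser_cv (fun m => Cmul (u (S m)) (e (S m))) (Cadd (Cmul q L) (Cmul (RtoC c) (u 2%nat)))).
  { eapply Cser_ext; [|exact H3]. intro m. simpl. rewrite ES. unfold d.
    destruct (Nat.eqb_spec m 1); [subst|]; cx. }
  pose proof (Cser_shift (fun m => Cmul (u m) (e m)) _ H4) as H5.
  simpl in H5. rewrite E0 in H5.
  rewrite (Cser_unique _ _ _ H2 H5). cx.
Qed.

Definition e3 w := ebasis w 3.
Definition ce3 w n := Cconj (ebasis w 3 n).

Lemma e3_rec w m : ebasis w 3 (S m) =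
  Cadd (Cmul (Cconj w) (ebasis w 3 m)) (if Nat.eqb m 1 then RtoC (/ knorm w) else C0).
Proof.
  destruct m as [|[|m]]; simpl; try cx.
  replace (m - 0)%nat with m by lia. cx.
Qed.

Lemma ce3_rec w m : Cconj (ebasis w 3 (S m)) =
  Cadd (Cmul w (Cconj (ebasis w 3 m))) (if Nat.eqb m 1 then RtoC (/ knorm w) else C0).
Proof.
  rewrite e3_rec. destruct (Nat.eqb m 1); cx.
Qed.

Lemma e3_0 w : ebasis w 3 0 = C0. Proof. reflexivity. Qed.
Lemma ce3_0 w : Cconj (ebasis w 3 0) = C0. Proof. cx. Qed.

Lemma Cser_evz a N v : (forall n, (N < n)%nat -> a n = C0) -> Cpsum a N = v -> Cser_cv a v.
Proof. intros H <-. apply Cser_evzero; auto. Qed.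

Lemma prod1_ex phi w n : prod_coef phi (ebasis w 1) n (phi (Z.of_nat n)).
Proof.
  apply (Cser_evz _ 0).
  - intros m Hm. destruct m; [lia|]. simpl. cx.
  - apply Cx_ext; simpl; replace (Z.of_nat n - 0)%Z with (Z.of_nat n) by lia; ring.
Qed.

Lemma prod2_ex phi w n : prod_coef phi (ebasis w 2) n (phi (Z.of_nat n - 1)%Z).
Proof.
  apply (Cser_evz _ 1).
  - intros m Hm. destruct m as [|[|m]]; [lia|lia|]. simpl. cx.
  - cx.
Qed.

Lemma prod1_val phi w n x : prod_coef phi (ebasis w 1) n x -> x = phi (Z.of_nat n).
Proof. intro H. exact (Cser_unique _ _ _ H (prod1_ex phi w n)). Qed.
Lemma prod2_val phi w n x : prod_coef phi (ebasis w 2) n x -> x = phi (Z.of_nat n - 1)%Z.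
Proof. intro H. exact (Cser_unique _ _ _ H (prod2_ex phi w n)). Qed.

Lemma outer1 w g v : Cser_cv (fun n => Cmul (g n) (Cconj (ebasis w 1 n))) v -> v = g 0%nat.
Proof.
  intro H. apply (Cser_unique _ _ _ H). apply (Cser_evz _ 0).
  - intros m Hm. destruct m; [lia|]. simpl. cx.
  - cx.
Qed.
Lemma outer2 w g v : Cser_cv (fun n => Cmul (g n) (Cconj (ebasis w 2 n))) v -> v = g 1%nat.
Proof.
  intro H. apply (Cser_unique _ _ _ H). apply (Cser_evz _ 1).
  - intros m Hm. destruct m as [|[|m]]; [lia|lia|]. simpl. cx.
  - cx.
Qed.

Lemma G_rec w phi G : (forall n, prod_coef phi (ebasis w 3) n (G n)) ->
  forall n, G (S n) = Cadd (Cmul (Cconj w) (G n)) (Cmul (RtoC (/ knorm w)) (phi (Z.of_nat n - 1)%Z)).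
Proof.
  intros HG n.
  pose proof (shift_rec (fun m => phi (Z.of_nat (S n) - Z.of_nat m)%Z) (ebasis w 3) (Cconj w) (/ knorm w) (G n) (G (S n)) (e3_0 w) (e3_rec w)) as R.
  rewrite R.
  - replace (Z.of_nat (S n) - Z.of_nat 2)%Z with (Z.of_nat n - 1)%Z by lia. reflexivity.
  - eapply Cser_ext; [|apply (HG n)]. intro m. cbv beta.
    replace (Z.of_nat (S n) - Z.of_nat (S m))%Z with (Z.of_nat n - Z.of_nat m)%Z by lia. reflexivity.
  - apply HG.
Qed.

Lemma ent11 w phi v : tto_entry w phi 1 1 v -> v = phi 0%Z.
Proof. intros [g [Hg Hv]]. rewrite (outer1 _ _ _ Hv). apply (prod1_val _ _ _ _ (Hg 0%nat)). Qed.
Lemma ent21 w phi v : tto_entry w phi 2 1 v -> v = phi 1%Z.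
Proof. intros [g [Hg Hv]]. rewrite (outer2 _ _ _ Hv). apply (prod1_val _ _ _ _ (Hg 1%nat)). Qed.
Lemma ent12 w phi v : tto_entry w phi 1 2 v -> v = phi (-1)%Z.
Proof. intros [g [Hg Hv]]. rewrite (outer1 _ _ _ Hv). apply (prod2_val _ _ _ _ (Hg 0%nat)). Qed.
Lemma ent22 w phi v : tto_entry w phi 2 2 v -> v = phi 0%Z.
Proof. intros [g [Hg Hv]]. rewrite (outer2 _ _ _ Hv). apply (prod2_val _ _ _ _ (Hg 1%nat)). Qed.
Lemma ent13 w phi v : tto_entry w phi 1 3 v ->
  exists G, (forall n, prod_coef phi (ebasis w 3) n (G n)) /\ v = G 0%nat.
Proof. intros [g [Hg Hv]]. exists g. split; auto. apply (outer1 _ _ _ Hv). Qed.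
Lemma ent23 w phi v : tto_entry w phi 2 3 v ->
  exists G, (forall n, prod_coef phi (ebasis w 3) n (G n)) /\ v = G 1%nat.
Proof. intros [g [Hg Hv]]. exists g. split; auto. apply (outer2 _ _ _ Hv). Qed.
Lemma ent31 w phi v : tto_entry w phi 3 1 v ->
  Cser_cv (fun n => Cmul (phi (Z.of_nat n)) (Cconj (ebasis w 3 n))) v.
Proof. intros [g [Hg Hv]]. eapply Cser_ext; [|exact Hv]. intro n. simpl. rewrite (prod1_val _ _ _ _ (Hg n)). reflexivity. Qed.
Lemma ent32 w phi v : tto_entry w phi 3 2 v ->
  Cser_cv (fun n => Cmul (phi (Z.of_nat n - 1)%Z) (Cconj (ebasis w 3 n))) v.
Proof. intros [g [Hg Hv]]. eapply Cser_ext; [|exact Hv]. intro n. simpl. rewrite (prod2_val _ _ _ _ (Hg n)). reflexivity. Qed.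

Lemma G_uniq w phi G G' : (forall n, prod_coef phi (ebasis w 3) n (G n)) ->
  (forall n, prod_coef phi (ebasis w 3) n (G' n)) -> forall n, G n = G' n.
Proof. intros H H' n. exact (Cser_unique _ _ _ (H n) (H' n)). Qed.

Lemma R2 w phi v23 v13 v12 : tto_entry w phi 2 3 v23 -> tto_entry w phi 1 3 v13 ->
  tto_entry w phi 1 2 v12 ->
  v23 = Cadd (Cmul (Cconj w) v13) (Cmul (RtoC (/ knorm w)) v12).
Proof.
  intros H23 H13 H12. rewrite (ent12 _ _ _ H12).
  destruct (ent23 _ _ _ H23) as [G [HG ->]]. destruct (ent13 _ _ _ H13) as [G' [HG' ->]].
  rewrite (G_rec _ _ _ HG 0). rewrite (G_uniq _ _ _ _ HG HG' 0). reflexivity.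
Qed.

Lemma R3 w phi v32 v21 v31 : tto_entry w phi 3 2 v32 -> tto_entry w phi 2 1 v21 ->
  tto_entry w phi 3 1 v31 ->
  v32 = Cadd (Cmul (RtoC (/ knorm w)) v21) (Cmul w v31).
Proof.
  intros H32 H21 H31. rewrite (ent21 _ _ _ H21).
  pose proof (shift_rec (fun m => phi (Z.of_nat m - 1)%Z) (fun n => Cconj (ebasis w 3 n)) w (/ knorm w) v31 v32 (ce3_0 w) (ce3_rec w)) as R.
  rewrite R.
  - simpl. cx.
  - eapply Cser_ext; [|apply (ent31 _ _ _ H31)]. intro m. cbv beta.
    replace (Z.of_nat (S m) - 1)%Z with (Z.of_nat m) by lia. reflexivity.
  - apply (ent32 _ _ _ H32).
Qed.

Lemma alg4 w c v33 v11 v12 v13 v21 v31 :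
  c * c = 1 - Cnorm2 w -> c <> 0 ->
  v33 = Cadd (Cmul w (Cadd (Cmul (Cconj w) v33) (Cmul (RtoC c) (Cadd (Cmul (RtoC c) v21) (Cmul w v31)))))
          (Cmul (RtoC c) (Cadd (Cmul (Cconj w) (Cadd (Cmul (Cconj w) v13) (Cmul (RtoC c) v12))) (Cmul (RtoC c) v11))) ->
  v33 = Cadd v11
      (Cadd (Cmul (Cmul (Cpow (Cconj w) 2) (RtoC (/ c))) v13)
       (Cadd (Cmul (Cconj w) v12)
        (Cadd (Cmul w v21)
              (Cmul (Cmul (Cpow w 2) (RtoC (/ c))) v31)))).
Proof.
  intros Hc Hc0 E.
  destruct w as [a b']. destruct v33 as [x y]. unfold Cnorm2 in Hc. simpl in Hc.
  pose proof (f_equal re E) as Er. pose proof (f_equal im E) as Ei. simpl in Er, Ei.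
  assert (Xr : c * c * x = c * c * x) by reflexivity.
  apply Cx_ext; simpl.
  - apply (Rmult_eq_reg_l (c * c)); [|nra].
    assert (c * c * x = x - (a*a+b'*b')*x) by (rewrite Hc; ring).
    field_simplify; [|auto]. nra.
  - apply (Rmult_eq_reg_l (c * c)); [|nra].
    assert (c * c * y = y - (a*a+b'*b')*y) by (rewrite Hc; ring).
    field_simplify; [|auto]. nra.
Qed.

Lemma c_facts w : Cnorm2 w < 1 ->
  / knorm w * / knorm w = 1 - Cnorm2 w /\ / knorm w <> 0 /\ knorm w = / (/ knorm w).
Proof.
  intros H. unfold knorm. rewrite Rinv_inv.
  assert (0 < sqrt (1 - Cnorm2 w)) by (apply sqrt_lt_R0; lra).
  split; [apply sqrt_sqrt; lra|split; [lra|reflexivity]].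
Qed.

Lemma R4 w phi v33 v32 v13 v12 v11 v21 v31 : Cnorm2 w < 1 ->
  tto_entry w phi 3 3 v33 -> tto_entry w phi 3 2 v32 -> tto_entry w phi 1 3 v13 ->
  tto_entry w phi 1 2 v12 -> tto_entry w phi 1 1 v11 -> tto_entry w phi 2 1 v21 ->
  tto_entry w phi 3 1 v31 ->
   v33 =
     Cadd v11
      (Cadd (Cmul (Cmul (Cpow (Cconj w) 2) (RtoC (knorm w))) v13)
       (Cadd (Cmul (Cconj w) v12)
        (Cadd (Cmul w v21)
              (Cmul (Cmul (Cpow w 2) (RtoC (knorm w))) v31)))).
Proof.
  intros hw H33 H32 H13 H12 H11 H21 H31.
  destruct (c_facts w hw) as [Hc [Hc0 Hk]]. rewrite Hk.
  pose proof (R3 _ _ _ _ _ H32 H21 H31) as E32.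
  destruct H33 as [g [Hg Hv]].
  set (c := / knorm w) in *.
  assert (H1 : Cser_cv (fun m => Cmul (g (S m)) (Cconj (ebasis w 3 m)))
                 (Cadd (Cmul (Cconj w) v33) (Cmul (RtoC c) v32))).
  { eapply Cser_ext; [|exact (Cser_add _ _ _ _ (Cser_scal (Cconj w) _ _ Hv) (Cser_scal (RtoC c) _ _ (ent32 _ _ _ H32)))].
    intro m. cbv beta. rewrite (G_rec _ _ _ Hg m). fold c. cx. }
  pose proof (shift_rec g (fun n => Cconj (ebasis w 3 n)) w c _ _ (ce3_0 w) (ce3_rec w) H1 Hv) as E.
  rewrite (G_rec _ _ _ Hg 1), (G_rec _ _ _ Hg 0) in E. simpl in E.
  destruct (ent13 _ _ _ H13) as [G' [HG' E13]].
  rewrite (G_uniq _ _ _ _ Hg HG' 0), <- E13 in E.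
  rewrite <- (ent12 _ _ _ H12), <- (ent11 _ _ _ H11), E32 in E.
  apply alg4; auto.
Qed.

Definition phiB (w : Cx) (b : nat -> nat -> Cx) (z : Z) : Cx :=
  if Z.eqb z 0 then b 1%nat 1%nat else
  if Z.eqb z 1 then b 2%nat 1%nat else
  if Z.eqb z (-1) then b 1%nat 2%nat else
  if Z.eqb z 2 then Cmul (b 3%nat 1%nat) (RtoC (knorm w)) else
  if Z.eqb z (-2) then Cmul (b 1%nat 3%nat) (RtoC (knorm w)) else C0.

Lemma phiB_zero w b z : (3 <= z \/ z <= -3)%Z -> phiB w b z = C0.
Proof.
  intro H. unfold phiB.
  repeat (match goal with |- context [Z.eqb ?x ?y] => destruct (Z.eqb_spec x y); [lia|] end).
  reflexivity.
Qed.

Lemma sum_nonneg_mono f N k : (forall n, 0 <= f n) -> sum_f_R0 f N <= sum_f_R0 f (N + k).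
Proof.
  intro Hf. induction k. rewrite Nat.add_0_r; lra.
  replace (N + S k)%nat with (S (N + k)) by lia. simpl. specialize (Hf (S (N + k))). lra.
Qed.

Lemma sum_zero_tail f N k : (forall n, (N < n)%nat -> f n = 0) -> sum_f_R0 f (N + k) = sum_f_R0 f N.
Proof.
  intro Hz. induction k. rewrite Nat.add_0_r; reflexivity.
  replace (N + S k)%nat with (S (N + k)) by lia. simpl. rewrite IHk, Hz by lia. ring.
Qed.

Lemma Cnorm2_nonneg x : 0 <= Cnorm2 x.
Proof. unfold Cnorm2. nra. Qed.

Lemma phiB_L2 w b : L2 (phiB w b).
Proof.
  set (f := fun n : nat => Cnorm2 (phiB w b (Z.of_nat n)) + Cnorm2 (phiB w b (- Z.of_nat n - 1)%Z)).
  exists (sum_f_R0 f 2).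
  intro N.
  assert (Hf : forall n, 0 <= f n) by (intro; unfold f; pose proof (Cnorm2_nonneg (phiB w b (Z.of_nat n))); pose proof (Cnorm2_nonneg (phiB w b (- Z.of_nat n - 1)%Z)); lra).
  assert (Hz : forall n, (2 < n)%nat -> f n = 0).
  { intros n Hn. unfold f. rewrite !phiB_zero by lia. unfold Cnorm2; simpl; ring. }
  pose proof (sum_nonneg_mono f N 2 Hf).
  rewrite Nat.add_comm, sum_zero_tail in H by exact Hz. exact H.
Qed.

Definition gB3 w b n := Cpsum (fun m => Cmul (phiB w b (Z.of_nat n - Z.of_nat m)%Z) (ebasis w 3 m)) (n + 2).

Lemma inner3 w b n : prod_coef (phiB w b) (ebasis w 3) n (gB3 w b n).
Proof.
  apply Cser_evzero. intros m Hm. rewrite phiB_zero by lia. cx.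
Qed.

Lemma outer12_ex w i g : (i = 1 \/ i = 2)%nat ->
  Cser_cv (fun n => Cmul (g n) (Cconj (ebasis w i n))) (Cpsum (fun n => Cmul (g n) (Cconj (ebasis w i n))) 1).
Proof.
  intros Hi. apply Cser_evzero. intros m Hm.
  destruct m as [|[|m]]; [lia|lia|]. destruct Hi; subst; cx.
Qed.

Lemma tto12_ex w b i j : (i = 1 \/ i = 2)%nat -> (j = 1 \/ j = 2 \/ j = 3)%nat ->
  exists v, tto_entry w (phiB w b) i j v.
Proof.
  intros Hi Hj. destruct Hj as [ -> | [ -> | -> ] ].
  - eexists. exists (fun n => phiB w b (Z.of_nat n)). split; [intro; apply prod1_ex|apply outer12_ex; auto].
  - eexists. exists (fun n => phiB w b (Z.of_nat n - 1)%Z). split; [intro; apply prod2_ex|apply outer12_ex; auto].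
  - eexists. exists (gB3 w b). split; [intro; apply inner3|apply outer12_ex; auto].
Qed.

Lemma ser_ex_shift a : (exists l, Cser_cv (fun n => a (S n)) l) -> exists l, Cser_cv a l.
Proof. intros [l H]. eexists. apply (Cser_shift _ _ H). Qed.

Lemma tto33_ex w b : Cnorm2 w < 1 -> exists v, tto_entry w (phiB w b) 3 3 v.
Proof.
  intros hw.
  set (G := gB3 w b).
  assert (HG : forall n, prod_coef (phiB w b) (ebasis w 3) n (G n)) by (intro; apply inner3).
  set (term := fun n => Cmul (G n) (Cconj (ebasis w 3 n))).
  set (K := term 4%nat).
  set (r := Cnorm2 w).
  assert (Ht : forall k, term (4 + k)%nat = Cmul K (RtoC (r ^ k))).
  { induction k.
    - unfold K; simpl. cx.
    - transitivity (Cmul (RtoC r) (term (4 + k)%nat)).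
      + unfold term. change (4 + S k)%nat with (S (4 + k)).
        rewrite (G_rec _ _ _ HG), ce3_rec, phiB_zero by lia.
        simpl Nat.eqb. cbv iota. unfold r, Cnorm2. cx.
      + rewrite IHk. unfold r. cx. }
  cut (exists v, Cser_cv term v).
  { intros [v Hv]. exists v, G. split; [exact HG|exact Hv]. }
  apply ser_ex_shift. apply ser_ex_shift. apply ser_ex_shift. apply ser_ex_shift.
  exists (Cmul K (RtoC (/ (1 - r)))).
  assert (Hg : Cser_cv (fun k => term (4 + k)%nat) (Cmul K (RtoC (/ (1 - r))))).
  { eapply Cser_ext; [intro k; symmetry; apply Ht|]. apply Cser_geom.
    unfold r; pose proof (Cnorm2_nonneg w); lra. }
  exact Hg.
Qed.

Lemma knorm_nz w : Cnorm2 w < 1 -> knorm w <> 0.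
Proof.
  intro H. unfold knorm. apply Rinv_neq_0_compat.
  assert (0 < sqrt (1 - Cnorm2 w)) by (apply sqrt_lt_R0; lra). lra.
Qed.

Lemma tto13 w b : Cnorm2 w < 1 -> tto_entry w (phiB w b) 1 3 (b 1%nat 3%nat).
Proof.
  intro hw. destruct (tto12_ex w b 1 3) as [v Hv]; [lia|lia|].
  replace (b 1%nat 3%nat) with v; [exact Hv|].
  destruct (ent13 _ _ _ Hv) as [G [HG ->]].
  rewrite (G_uniq _ _ _ _ HG (inner3 w b) 0).
  pose proof (knorm_nz w hw).
  unfold gB3, Cpsum, phiB. apply Cx_ext; simpl; field; auto.
Qed.

Lemma tto31 w b : Cnorm2 w < 1 -> tto_entry w (phiB w b) 3 1 (b 3%nat 1%nat).
Proof.
  intro hw. exists (fun n => phiB w b (Z.of_nat n)). split; [intro; apply prod1_ex|].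
  apply (Cser_evz _ 2).
  - intros n Hn. rewrite phiB_zero by lia. cx.
  - pose proof (knorm_nz w hw).
    unfold Cpsum, phiB. apply Cx_ext; simpl; field; auto.
Qed.

Lemma tto32_ex w b : exists v, tto_entry w (phiB w b) 3 2 v.
Proof.
  eexists. exists (fun n => phiB w b (Z.of_nat n - 1)%Z). split; [intro; apply prod2_ex|].
  apply (Cser_evzero _ 3). intros n Hn. rewrite phiB_zero by lia. cx.
Qed.

Theorem mainTheorem11 (w : Cx) (hw0 : w <> C0) (hw1 : Cnorm2 w < 1)
  (b : nat -> nat -> Cx) :
  in_TTO w b <->
  (b 2%nat 2%nat = b 1%nat 1%nat /\
   b 2%nat 3%nat = Cadd (Cmul (Cconj w) (b 1%nat 3%nat))
                        (Cmul (RtoC (/ knorm w)) (b 1%nat 2%nat)) /\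
   b 3%nat 2%nat = Cadd (Cmul (RtoC (/ knorm w)) (b 2%nat 1%nat))
                        (Cmul w (b 3%nat 1%nat)) /\
   b 3%nat 3%nat =
     Cadd (b 1%nat 1%nat)
      (Cadd (Cmul (Cmul (Cpow (Cconj w) 2) (RtoC (knorm w))) (b 1%nat 3%nat))
       (Cadd (Cmul (Cconj w) (b 1%nat 2%nat))
        (Cadd (Cmul w (b 2%nat 1%nat))
              (Cmul (Cmul (Cpow w 2) (RtoC (knorm w))) (b 3%nat 1%nat)))))).
Proof.
  split.
  - intros [phi [_ H]].
    assert (T : forall i j, tto_entry w phi i j (b i j) ->  tto_entry w phi i j (b i j)) by auto.
    pose proof (H 1 1 ltac:(lia) ltac:(lia))%nat as H11.
    pose proof (H 1 2 ltac:(lia) ltac:(lia))%nat as H12.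
    pose proof (H 1 3 ltac:(lia) ltac:(lia))%nat as H13.
    pose proof (H 2 1 ltac:(lia) ltac:(lia))%nat as H21.
    pose proof (H 2 2 ltac:(lia) ltac:(lia))%nat as H22.
    pose proof (H 2 3 ltac:(lia) ltac:(lia))%nat as H23.
    pose proof (H 3 1 ltac:(lia) ltac:(lia))%nat as H31.
    pose proof (H 3 2 ltac:(lia) ltac:(lia))%nat as H32.
    pose proof (H 3 3 ltac:(lia) ltac:(lia))%nat as H33.
    split; [rewrite (ent22 _ _ _ H22), (ent11 _ _ _ H11); reflexivity|].
    split; [exact (R2 _ _ _ _ _ H23 H13 H12)|].
    split; [exact (R3 _ _ _ _ _ H32 H21 H31)|].
    exact (R4 _ _ _ _ _ _ _ _ _ hw1 H33 H32 H13 H12 H11 H21 H31).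
  - intros [E22 [E23 [E32 E33]]].
    exists (phiB w b). split; [apply phiB_L2|].
    assert (H11 : tto_entry w (phiB w b) 1 1 (b 1%nat 1%nat)).
    { destruct (tto12_ex w b 1 1) as [v Hv]; [lia|lia|].
      rewrite (ent11 _ _ _ Hv) in Hv. exact Hv. }
    assert (H12 : tto_entry w (phiB w b) 1 2 (b 1%nat 2%nat)).
    { destruct (tto12_ex w b 1 2) as [v Hv]; [lia|lia|].
      rewrite (ent12 _ _ _ Hv) in Hv. exact Hv. }
    assert (H21 : tto_entry w (phiB w b) 2 1 (b 2%nat 1%nat)).
    { destruct (tto12_ex w b 2 1) as [v Hv]; [lia|lia|].
      rewrite (ent21 _ _ _ Hv) in Hv. exact Hv. }
    assert (H22 : tto_entry w (phiB w b) 2 2 (b 2%nat 2%nat)).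
    { destruct (tto12_ex w b 2 2) as [v Hv]; [lia|lia|].
      rewrite (ent22 _ _ _ Hv) in Hv. rewrite E22. exact Hv. }
    pose proof (tto13 w b hw1) as H13.
    pose proof (tto31 w b hw1) as H31.
    assert (H23 : tto_entry w (phiB w b) 2 3 (b 2%nat 3%nat)).
    { destruct (tto12_ex w b 2 3) as [v Hv]; [lia|lia|].
      rewrite (R2 _ _ _ _ _ Hv H13 H12) in Hv. rewrite E23. exact Hv. }
    assert (H32 : tto_entry w (phiB w b) 3 2 (b 3%nat 2%nat)).
    { destruct (tto32_ex w b) as [v Hv].
      rewrite (R3 _ _ _ _ _ Hv H21 H31) in Hv. rewrite E32. exact Hv. }
    assert (H33 : tto_entry w (phiB w b) 3 3 (b 3%nat 3%nat)).
    { destruct (tto33_ex w b hw1) as [v Hv].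
      rewrite (R4 _ _ _ _ _ _ _ _ _ hw1 Hv H32 H13 H12 H11 H21 H31) in Hv. rewrite E33. exact Hv. }
    intros i j Hi Hj.
    destruct i as [|[|[|[|i]]]]; try lia; destruct j as [|[|[|[|j]]]]; try lia; assumption.
Qed.
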